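(* There exists a function $g:\mathbb{R}_+\to\mathbb{R}$ with $\lim_{\varepsilon\to0^+}g(\varepsilon)=0$ such that, if $0<\varepsilon<\varepsilon^*$ and $R\in\mathbb{N}$ with $R\ge R_{\overline{\mathbb{Z}}}(\varepsilon)$, then for all $\sigma\in\{-,+\}$, writing $m_n=2\lceil n/2\rceil+1$, $$-I^{p_\sigma}_{\mathrm{Cr}}(0)-g(\varepsilon)\le\liminf_{n\to\infty}\frac1n\log\mathbb{P}_{\sigma R}\big(\Omega^\sigma_{m_n,\mathrm{exc}}\big)\le\limsup_{n\to\infty}\frac1n\log\mathbb{P}_{\sigma R}\big(\Omega^\sigma_{m_n,\mathrm{exc}}\big)\le-I^{p_\sigma}_{\mathrm{Cr}}(0)+g(\varepsilon),$$ $$-\inf_{\sigma x\in[0,1]}I^{p_\sigma}_{\mathrm{Cr}}(x)-g(\varepsilon)\le\liminf_{n\to\infty}\frac1n\log\mathbb{P}_{\sigma R}\big(\Omega^\sigma_{m_n,\mathrm{mea}}\big)\le\limsup_{n\to\infty}\frac1n\log\mathbb{P}_{\sigma R}\big(\Omega^\sigma_{m_n,\mathrm{mea}}\big)\le-\inf_{\sigma x\in[0,1]}I^{p_\sigma}_{\mathrm{Cr}}(x)+g(\varepsilon).$$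
   Context: Let $p:\mathbb{Z}\to[0,1]$ with $0<p(k)<1$ for all $k$ and limits $p_-=\lim_{k\to-\infty}p(k)$, $p_+=\lim_{k\to+\infty}p(k)$ in $(0,1)$. For $m\in\mathbb{Z}$, under $\mathbb{P}_m$, $(S_n)_{n\ge1}$ is the nearest-neighbour walk on $\mathbb{Z}$ with $S_1=m$, stepping $k\to k+1$ w.p. $p(k)$ and $k\to k-1$ w.p. $1-p(k)$. For a set $U$ of words of length $n$, $\mathbb{P}_m(U)$ means $\mathbb{P}_m((S_1,\dots,S_n)\in U)$. Signs $\sigma\in\{-,+\}$ are identified with $\mp1$, so $\sigma R=\pm R$. For $R\in\mathbb{N}$: $A^+=\{k\in\mathbb{Z}:k\ge R\}$, $A^-=\{k\in\mathbb{Z}:k\le-R\}$; $\Omega^\sigma_{n,\mathrm{exc}}$ is the set of $w=(w_1,\dots,w_n)\in\mathbb{Z}^n$ with $|w_i-w_{i+1}|=1$, $w_1=w_n=\sigma R$ and $w_j\in A^\sigma$ for all $j$; $\Omega^\sigma_{n,\mathrm{mea}}$ is the same without the condition on $w_n$. $R_{\overline{\mathbb{Z}}}(\varepsilon)=\lceil\log_2(1/\varepsilon)\rceil+1$. $G(\varepsilon)=\max_{\sigma\in\{-,+\}}\frac1{\min\{p_\sigma,1-p_\sigma\}}\sup_{k:\ \sigma k\ge R_{\overline{\mathbb{Z}}}(\varepsilon)}|p(k)-p_\sigma|$, which tends to $0$ as $\varepsilon\to0^+$; $\varepsilon^*>0$ is fixed such that $G(\varepsilon)<1$ for all $\varepsilon\in(0,\varepsilon^*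 )$. For $q\in(0,1)$, $I^q_{\mathrm{Cr}}(x)=\frac{1-x}{2}\log\frac{1-x}{2(1-q)}+\frac{1+x}{2}\log\frac{1+x}{2q}$ on $[-1,1]$ and $+\infty$ elsewhere. *)

(* Defs.v *)
From Stdlib Require Import Reals Lra Lia ZArith List.
From Coquelicot Require Import Coquelicot.
Import ListNotations.
Open Scope R_scope.

Inductive sgn := Minus | Plus.
Definition sz (s : sgn) : Z := match s with Minus => (-1)%Z | Plus => 1%Z end.
Definition sR (s : sgn) : R := IZR (sz s).
Definition psig (pm pp : R) (s : sgn) : R := match s with Minus => pm | Plus => pp end.

Definition ceilZ (x : R) : Z := (- Int_part (- x))%Z.

Definition RZ (eps : R) : Z := (ceilZ (ln (/ eps) / ln 2) + 1)%Z.

Definition Gsup (p : Z -> R) (pm pp : R) (s : sgn) (eps : R) : R :=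
  real (Lub_Rbar (fun y => exists k : Z,
          (sz s * k >= RZ eps)%Z /\ y = Rabs (p k - psig pm pp s))).

Definition G (p : Z -> R) (pm pp : R) (eps : R) : R :=
  Rmax (/ Rmin (psig pm pp Minus) (1 - psig pm pp Minus) * Gsup p pm pp Minus eps)
       (/ Rmin (psig pm pp Plus) (1 - psig pm pp Plus) * Gsup p pm pp Plus eps).

(* Cramer rate function of a +-1 step with P(+1)=q; +oo outside [-1,1].
   (Stdlib's ln 0 = 0 gives the convention 0 log 0 = 0 at x = +-1.) *)
Definition ICr (q x : R) : Rbar :=
  if Rle_dec (-1) x then
    if Rle_dec x 1 then
      Finite ((1 - x) / 2 * ln ((1 - x) / (2 * (1 - q)))
              + (1 + x) / 2 * ln ((1 + x) / (2 * q)))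
    else p_infty
  else p_infty.

Definition ICr_inf (q : R) (s : sgn) : Rbar :=
  Glb_Rbar (fun y => exists x : R, 0 <= sR s * x <= 1 /\ ICr q x = Finite y).

Fixpoint walk (m : Z) (st : list bool) : list Z :=
  m :: match st with
       | nil => nil
       | b :: st' => walk (if b then (m + 1)%Z else (m - 1)%Z) st'
       end.

Fixpoint wprob (p : Z -> R) (m : Z) (st : list bool) : R :=
  match st with
  | nil => 1
  | b :: st' => (if b then p m else 1 - p m) *
                wprob p (if b then (m + 1)%Z else (m - 1)%Z) st'
  end.

Fixpoint allsteps (k : nat) : list (list bool) :=
  match k with
  | O => [nil]
  | S k' => map (cons true) (allsteps k') ++ map (cons false) (allsteps k')
  end.

(* P_m((S_1,...,S_n) in U), S_1 = m, for a (decidable) set U of words. *)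
Definition Pw (p : Z -> R) (m : Z) (n : nat) (U : list Z -> bool) : R :=
  fold_right Rplus 0
    (map (fun st => wprob p m st * (if U (walk m st) then 1 else 0))
         (allsteps (n - 1))).

Fixpoint nn (w : list Z) : bool :=
  match w with
  | a :: ((b :: _) as w') => (Z.eqb (Z.abs (a - b)) 1) && nn w'
  | _ => true
  end.

Definition inA (s : sgn) (Rad : nat) (k : Z) : bool :=
  Z.geb (sz s * k) (Z.of_nat Rad).

Definition Omega_mea (s : sgn) (Rad n : nat) (w : list Z) : bool :=
  Nat.eqb (length w) n && nn w &&
  Z.eqb (hd 0%Z w) (sz s * Z.of_nat Rad) && forallb (inA s Rad) w.

Definition Omega_exc (s : sgn) (Rad n : nat) (w : list Z) : bool :=
  Omega_mea s Rad n w && Z.eqb (last w 0%Z) (sz s * Z.of_nat Rad).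

Definition mlen (n : nat) : nat := (2 * ((n + 1) / 2) + 1)%nat.

(* Main.v *)
Require Import Defs.
From Stdlib Require Import Reals ZArith List Lia Lra Binomial.
From Coquelicot Require Import Coquelicot.
Open Scope R_scope.

Definition indb (b : bool) : R := if b then 1 else 0.

Definition SA (k : nat) (F : list bool -> R) : R :=
  fold_right Rplus 0 (map F (allsteps k)).

Lemma fold_app (l1 l2 : list R) :
  fold_right Rplus 0 (l1 ++ l2) = fold_right Rplus 0 l1 + fold_right Rplus 0 l2.
Proof. induction l1; simpl; [ring| rewrite IHl1; ring]. Qed.

Lemma SA_S k F : SA (S k) F = SA k (fun st => F (true::st)) + SA k (fun st => F (false::st)).
Proof.
  unfold SA; simpl. rewrite map_app, fold_app, !map_map. reflexivity.
Qed.

Lemma SA_0 F : SA 0 F = F nil.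
Proof. unfold SA; simpl; ring. Qed.

Lemma fold_scal (c : R) (l : list R) :
  fold_right Rplus 0 (map (fun x => c * x) l) = c * fold_right Rplus 0 l.
Proof. induction l; simpl; [ring| rewrite IHl; ring]. Qed.

Lemma SA_scal k c F : SA k (fun st => c * F st) = c * SA k F.
Proof. unfold SA. rewrite <- fold_scal, map_map. reflexivity. Qed.

Lemma allsteps_len k st : In st (allsteps k) -> length st = k.
Proof.
  revert st; induction k; simpl; intros st H.
  - destruct H as [<-|[]]; reflexivity.
  - apply in_app_or in H; destruct H as [H|H]; apply in_map_iff in H;
    destruct H as [x [<- Hx]]; simpl; f_equal; auto.
Qed.

Lemma SA_ext k F1 F2 : (forall st, length st = k -> F1 st = F2 st) -> SA k F1 = SA k F2.
Proof.
  intros H; unfold SA; f_equal; apply map_ext_in; intros; apply H, allsteps_len; auto.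
Qed.

Lemma walk_cons m st : exists w, walk m st = m :: w.
Proof. destruct st; simpl; eexists; reflexivity. Qed.

Lemma walk_len m st : length (walk m st) = S (length st).
Proof. revert m; induction st; intros m; simpl; [reflexivity| rewrite IHst; reflexivity]. Qed.

Lemma nn_cons2 a b w : nn (a :: b :: w) = andb (Z.eqb (Z.abs (a - b)) 1) (nn (b :: w)).
Proof. reflexivity. Qed.

Lemma walk_nn m st : nn (walk m st) = true.
Proof.
  revert m; induction st as [|b st IH]; intros m; [reflexivity|].
  change (walk m (b :: st)) with (m :: walk (if b then (m+1)%Z else (m-1)%Z) st).
  destruct (walk_cons (if b then (m+1)%Z else (m-1)%Z) st) as [w Hw].
  rewrite Hw, nn_cons2, <- Hw, IH. destruct b; rewrite Bool.andb_true_r; apply Z.eqb_eq; lia.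
Qed.

Section W.
Variable p : Z -> R.
Variable s : sgn.
Variable Rad : nat.

Definition Fk (U : list Z -> bool) (k : nat) (x : Z) : R :=
  SA k (fun st => wprob p x st * indb (U (walk x st))).

Lemma ind_and a b : indb (andb a b) = indb a * indb b.
Proof. destruct a, b; simpl; ring. Qed.

Lemma Fk_S U k x :
  (forall a w, w <> nil -> U (a :: w) = andb (inA s Rad a) (U w)) ->
  Fk U (S k) x = indb (inA s Rad x) * (p x * Fk U k (x+1) + (1 - p x) * Fk U k (x-1)).
Proof.
  intros HU. unfold Fk. rewrite SA_S, Rmult_plus_distr_l.
  f_equal.
  - rewrite <- SA_scal, <- SA_scal. apply SA_ext; intros st _.
    change (walk x (true :: st)) with (x :: walk (x+1)%Z st).
    rewrite HU by (destruct (walk_cons (x+1)%Z st) as [w ->]; discriminate).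
    rewrite ind_and. simpl. ring.
  - rewrite <- SA_scal, <- SA_scal. apply SA_ext; intros st _.
    change (walk x (false :: st)) with (x :: walk (x-1)%Z st).
    rewrite HU by (destruct (walk_cons (x-1)%Z st) as [w ->]; discriminate).
    rewrite ind_and. simpl. ring.
Qed.

End W.

Fixpoint Hq (P : Z -> R) (b : Z -> R) (k : nat) (y : Z) : R :=
  match k with
  | O => b y
  | S k => if (y <? 0)%Z then 0 else P y * Hq P b k (y+1) + (1 - P y) * Hq P b k (y-1)
  end.

Definition Xy (s : sgn) (Rad : nat) (y : Z) : Z := (sz s * (y + Z.of_nat Rad))%Z.
Definition Pout (p : Z -> R) (s : sgn) (x : Z) : R :=
  match s with Plus => p x | Minus => 1 - p x end.

Lemma sz_sq s z : (sz s * (sz s * z) = z)%Z.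
Proof. destruct s; unfold sz; lia. Qed.

Lemma inA_Xy s Rad y : inA s Rad (Xy s Rad y) = negb (y <? 0)%Z.
Proof.
  unfold inA, Xy. rewrite sz_sq.
  destruct (Z.ltb_spec y 0); destruct (Z.geb_spec (y + Z.of_nat Rad) (Z.of_nat Rad)); simpl; lia.
Qed.

Lemma Fk_Hq p s Rad U :
  (forall a w, w <> nil -> U (a :: w) = andb (inA s Rad a) (U w)) ->
  forall k y, Fk p U k (Xy s Rad y) =
    Hq (fun y => Pout p s (Xy s Rad y)) (fun y => Fk p U 0 (Xy s Rad y)) k y.
Proof.
  intros HU k; induction k; intros y; [reflexivity|].
  rewrite (Fk_S p s Rad) by exact HU. rewrite inA_Xy. simpl Hq.
  destruct (y <? 0)%Z; simpl; [ring|].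
  destruct s; simpl Pout.
  - replace (Xy Minus Rad y + 1)%Z with (Xy Minus Rad (y-1)) by (unfold Xy, sz; lia).
    replace (Xy Minus Rad y - 1)%Z with (Xy Minus Rad (y+1)) by (unfold Xy, sz; lia).
    rewrite !IHk; simpl Pout; ring.
  - replace (Xy Plus Rad y + 1)%Z with (Xy Plus Rad (y+1)) by (unfold Xy, sz; lia).
    replace (Xy Plus Rad y - 1)%Z with (Xy Plus Rad (y-1)) by (unfold Xy, sz; lia).
    rewrite !IHk; simpl Pout; ring.
Qed.

Definition Umea s Rad : list Z -> bool := forallb (inA s Rad).
Definition Uexc s Rad : list Z -> bool :=
  fun w => andb (forallb (inA s Rad) w) (Z.eqb (last w 0%Z) (sz s * Z.of_nat Rad)).

Lemma Umea_cons s Rad a w : w <> nil -> Umea s Rad (a :: w) = andb (inA s Rad a) (Umea s Rad w).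
Proof. reflexivity. Qed.

Lemma Uexc_cons s Rad a w : w <> nil -> Uexc s Rad (a :: w) = andb (inA s Rad a) (Uexc s Rad w).
Proof.
  intros H. unfold Uexc. destruct w as [|b w]; [congruence|].
  simpl forallb. change (last (a :: b :: w) 0%Z) with (last (b :: w) 0%Z). rewrite !Bool.andb_assoc. reflexivity.
Qed.

Lemma Fk_0 p U x : Fk p U 0 x = indb (U (x :: nil)).
Proof. unfold Fk. rewrite SA_0. simpl. ring. Qed.

Lemma Pw_mea p s Rad n : (1 <= n)%nat ->
  Pw p (sz s * Z.of_nat Rad) n (Omega_mea s Rad n) = Fk p (Umea s Rad) (n-1) (sz s * Z.of_nat Rad).
Proof.
  intros Hn. unfold Pw, Fk, SA. f_equal. apply map_ext_in. intros st Hst.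
  apply allsteps_len in Hst. f_equal. unfold Omega_mea.
  rewrite walk_len, walk_nn, Hst. destruct (walk_cons (sz s * Z.of_nat Rad) st) as [w Hw].
  rewrite Hw. simpl hd. rewrite Z.eqb_refl. replace (S (n-1)) with n by lia.
  rewrite Nat.eqb_refl. reflexivity.
Qed.

Lemma Pw_exc p s Rad n : (1 <= n)%nat ->
  Pw p (sz s * Z.of_nat Rad) n (Omega_exc s Rad n) = Fk p (Uexc s Rad) (n-1) (sz s * Z.of_nat Rad).
Proof.
  intros Hn. unfold Pw, Fk, SA. f_equal. apply map_ext_in. intros st Hst.
  apply allsteps_len in Hst. f_equal. unfold Omega_exc, Omega_mea, Uexc.
  rewrite walk_len, walk_nn, Hst. destruct (walk_cons (sz s * Z.of_nat Rad) st) as [w Hw].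
  rewrite Hw. simpl hd. rewrite Z.eqb_refl. replace (S (n-1)) with n by lia.
  rewrite Nat.eqb_refl. reflexivity.
Qed.

Lemma Xy0 s Rad : Xy s Rad 0 = (sz s * Z.of_nat Rad)%Z.
Proof. reflexivity. Qed.

Definition bmea (y : Z) : R := if (y <? 0)%Z then 0 else 1.
Definition bexc (y : Z) : R := if (y =? 0)%Z then 1 else 0.

Lemma Hq_ext P b1 b2 : (forall y, b1 y = b2 y) -> forall k y, Hq P b1 k y = Hq P b2 k y.
Proof. intros H k; induction k; intros y; simpl; [apply H| rewrite !IHk; reflexivity]. Qed.

Lemma base_mea p s Rad y : Fk p (Umea s Rad) 0 (Xy s Rad y) = bmea y.
Proof.
  rewrite Fk_0. unfold Umea, bmea. simpl forallb. rewrite inA_Xy.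
  destruct (y <? 0)%Z; reflexivity.
Qed.

Lemma base_exc p s Rad y : Fk p (Uexc s Rad) 0 (Xy s Rad y) = bexc y.
Proof.
  rewrite Fk_0. unfold Uexc, bexc. simpl forallb. rewrite inA_Xy. simpl last.
  unfold Xy.
  destruct (Z.ltb_spec y 0); destruct (Z.eqb_spec y 0);
   destruct (Z.eqb_spec (sz s * (y + Z.of_nat Rad)) (sz s * Z.of_nat Rad)); simpl; try reflexivity;
   destruct s; unfold sz in *; lia.
Qed.

Lemma Pw_mea_Hq p s Rad n : (1 <= n)%nat ->
  Pw p (sz s * Z.of_nat Rad) n (Omega_mea s Rad n) =
  Hq (fun y => Pout p s (Xy s Rad y)) bmea (n-1) 0.
Proof.
  intros Hn. rewrite Pw_mea by exact Hn. rewrite <- Xy0.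
  rewrite Fk_Hq by apply Umea_cons. apply Hq_ext. apply base_mea.
Qed.

Lemma Pw_exc_Hq p s Rad n : (1 <= n)%nat ->
  Pw p (sz s * Z.of_nat Rad) n (Omega_exc s Rad n) =
  Hq (fun y => Pout p s (Xy s Rad y)) bexc (n-1) 0.
Proof.
  intros Hn. rewrite Pw_exc by exact Hn. rewrite <- Xy0.
  rewrite Fk_Hq by apply Uexc_cons. apply Hq_ext. apply base_exc.
Qed.

Lemma Hq_nonneg P b : (forall y, 0 <= P y <= 1) -> (forall y, 0 <= b y) ->
  forall k y, 0 <= Hq P b k y.
Proof.
  intros HP Hb k; induction k; intros y; simpl; [apply Hb|].
  destruct (y <? 0)%Z; [lra|].
  specialize (HP y). pose proof (IHk (y+1)%Z). pose proof (IHk (y-1)%Z). nra.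
Qed.

Lemma Hq_mono_b P b1 b2 : (forall y, 0 <= P y <= 1) -> (forall y, b1 y <= b2 y) ->
  forall k y, Hq P b1 k y <= Hq P b2 k y.
Proof.
  intros HP Hb k; induction k; intros y; simpl; [apply Hb|].
  destruct (y <? 0)%Z; [lra|].
  specialize (HP y). pose proof (IHk (y+1)%Z). pose proof (IHk (y-1)%Z). nra.
Qed.

Lemma Hq_upper P b lam K :
  (forall y, (0 <= y)%Z -> 0 <= P y <= 1 /\ P y * exp lam + (1 - P y) * exp (- lam) <= K) ->
  0 <= K ->
  (forall y, b y <= exp (lam * IZR y)) ->
  forall k y, Hq P b k y <= K ^ k * exp (lam * IZR y).
Proof.
  intros HP HK Hb k; induction k; intros y; simpl Hq.
  - simpl. rewrite Rmult_1_l. apply Hb.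
  - destruct (Z.ltb_spec y 0).
    + apply Rmult_le_pos; [apply pow_le; lra| left; apply exp_pos].
    + destruct (HP y H) as [HP1 HP2].
      pose proof (IHk (y+1)%Z) as h1. pose proof (IHk (y-1)%Z) as h2.
      rewrite plus_IZR, Rmult_plus_distr_l, exp_plus, Rmult_1_r in h1.
      rewrite minus_IZR, Rmult_minus_distr_l, Rmult_1_r in h2.
      unfold Rminus in h2. rewrite exp_plus in h2.
      apply Rle_trans with (P y * (K ^ k * (exp (lam * IZR y) * exp lam)) +
                            (1 - P y) * (K ^ k * (exp (lam * IZR y) * exp (- lam)))).
      { apply Rplus_le_compat; apply Rmult_le_compat_l; lra. }
      replace (P y * (K ^ k * (exp (lam * IZR y) * exp lam)) +
               (1 - P y) * (K ^ k * (exp (lam * IZR y) * exp (- lam))))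
        with ((K ^ k * exp (lam * IZR y)) * (P y * exp lam + (1 - P y) * exp (- lam))) by ring.
      replace (K ^ S k * exp (lam * IZR y)) with ((K ^ k * exp (lam * IZR y)) * K) by (simpl; ring).
      apply Rmult_le_compat_l; [|lra].
      apply Rmult_le_pos; [apply pow_le; lra| left; apply exp_pos].
Qed.

Lemma Hq_compare P1 q b a :
  (forall y, 0 <= P1 y <= 1) -> 0 <= q <= 1 -> (forall y, 0 <= b y) -> 0 <= a ->
  (forall y, (0 <= y)%Z -> a * q <= P1 y /\ a * (1 - q) <= 1 - P1 y) ->
  forall k y, a ^ k * Hq (fun _ => q) b k y <= Hq P1 b k y.
Proof.
  intros HP Hq01 Hb Ha Hc k; induction k; intros y; simpl Hq.
  - simpl; lra.
  - destruct (Z.ltb_spec y 0); [simpl; lra|].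
    destruct (Hc y H) as [c1 c2].
    pose proof (IHk (y+1)%Z) as h1. pose proof (IHk (y-1)%Z) as h2.
    assert (n1 : 0 <= a ^ k * Hq (fun _ => q) b k (y+1)).
    { apply Rmult_le_pos; [apply pow_le; lra| apply Hq_nonneg; auto; intros; lra]. }
    assert (n2 : 0 <= a ^ k * Hq (fun _ => q) b k (y-1)).
    { apply Rmult_le_pos; [apply pow_le; lra| apply Hq_nonneg; auto; intros; lra]. }
    specialize (HP y).
    replace (a ^ S k * (q * Hq (fun _ => q) b k (y + 1) + (1 - q) * Hq (fun _ => q) b k (y - 1)))
      with ((a * q) * (a ^ k * Hq (fun _ => q) b k (y + 1)) + (a * (1 - q)) * (a ^ k * Hq (fun _ => q) b k (y - 1)))
      by (simpl; ring).
    apply Rplus_le_compat.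
    + apply Rle_trans with (P1 y * (a ^ k * Hq (fun _ => q) b k (y + 1))).
      * apply Rmult_le_compat_r; lra.
      * apply Rmult_le_compat_l; lra.
    + apply Rle_trans with ((1 - P1 y) * (a ^ k * Hq (fun _ => q) b k (y - 1))).
      * apply Rmult_le_compat_r; lra.
      * apply Rmult_le_compat_l; lra.
Qed.

Lemma bmea_nonneg y : 0 <= bmea y.
Proof. unfold bmea; destruct (y <? 0)%Z; lra. Qed.
Lemma bexc_nonneg y : 0 <= bexc y.
Proof. unfold bexc; destruct (y =? 0)%Z; lra. Qed.
Lemma bexc_le_bmea y : bexc y <= bmea y.
Proof. unfold bexc, bmea; destruct (Z.eqb_spec y 0); destruct (Z.ltb_spec y 0); lra || lia. Qed.

Lemma Hq_mea_low q : 0 < q <= 1 ->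
  forall k n, 1 - ((1 - q) / q) ^ (S n) <= Hq (fun _ => q) bmea k (Z.of_nat n).
Proof.
  intros Hq01. set (r := (1 - q) / q).
  assert (r0 : 0 <= r) by (unfold r; apply Rdiv_le_0_compat; lra).
  intros k; induction k; intros n; simpl Hq.
  - unfold bmea. destruct (Z.ltb_spec (Z.of_nat n) 0); [lia|].
    pose proof (pow_le r (S n) r0). lra.
  - destruct (Z.ltb_spec (Z.of_nat n) 0); [lia|].
    replace (Z.of_nat n + 1)%Z with (Z.of_nat (S n)) by lia.
    pose proof (IHk (S n)) as h1.
    assert (h2 : 1 - r ^ n <= Hq (fun _ => q) bmea k (Z.of_nat n - 1)).
    { destruct n.
      - simpl. rewrite Rminus_diag. apply Hq_nonneg; [intros; lra| apply bmea_nonneg].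
      - replace (Z.of_nat (S n) - 1)%Z with (Z.of_nat n) by lia. apply IHk. }
    assert (e : q * (1 - r ^ S (S n)) + (1 - q) * (1 - r ^ n) = 1 - r ^ S n).
    { simpl. unfold r. field. lra. }
    rewrite <- e. apply Rplus_le_compat; apply Rmult_le_compat_l; lra.
Qed.

Definition bn (n i : nat) : R := if (i <=? n)%nat then Binomial.C n i else 0.

Lemma C_nn n : Binomial.C n n = 1.
Proof. unfold Binomial.C. rewrite Nat.sub_diag. simpl. field. apply INR_fact_neq_0. Qed.
Lemma C_n0 n : Binomial.C n 0 = 1.
Proof. unfold Binomial.C. rewrite Nat.sub_0_r. simpl. field. apply INR_fact_neq_0. Qed.

Lemma bn_nn n : bn n n = 1.
Proof. unfold bn. rewrite Nat.leb_refl. apply C_nn. Qed.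
Lemma bn_over n i : (n < i)%nat -> bn n i = 0.
Proof. intros H. unfold bn. destruct (Nat.leb_spec i n); [lia|reflexivity]. Qed.
Lemma bn_0 n : bn n 0 = 1.
Proof. unfold bn. simpl. apply C_n0. Qed.

Lemma bn_pascal n i : bn (S n) (S i) = bn n i + bn n (S i).
Proof.
  destruct (Nat.lt_trichotomy i n) as [H|[H|H]].
  - unfold bn. destruct (Nat.leb_spec (S i) (S n)); [|lia].
    destruct (Nat.leb_spec i n); [|lia]. destruct (Nat.leb_spec (S i) n); [|lia].
    symmetry; apply pascal; auto.
  - subst. rewrite !bn_nn, bn_over by lia. ring.
  - rewrite !bn_over by lia. ring.
Qed.

Lemma bn_sym d : bn (S (d + d)) d = bn (S (d + d)) (S d).
Proof.
  unfold bn. destruct (Nat.leb_spec d (S (d+d))); [|lia].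
  destruct (Nat.leb_spec (S d) (S (d+d))); [|lia].
  rewrite pascal_step1 by lia. f_equal. lia.
Qed.

Definition Psi (q : R) (u d : nat) : R := q ^ u * (1 - q) ^ d * (bn (u + d) d - bn (u + d) (S d)).

Lemma Hq_exc_neg q k y : (y < 0)%Z -> Hq (fun _ => q) bexc k y = 0.
Proof.
  intros H; destruct k; simpl.
  - unfold bexc. destruct (Z.eqb_spec y 0); [lia|reflexivity].
  - destruct (Z.ltb_spec y 0); [reflexivity|lia].
Qed.

Lemma Hq_exc_far q k y : (Z.of_nat k < y)%Z -> Hq (fun _ => q) bexc k y = 0.
Proof.
  revert y; induction k; intros y H; simpl.
  - unfold bexc. destruct (Z.eqb_spec y 0); [lia|reflexivity].
  - destruct (Z.ltb_spec y 0); [reflexivity|].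
    rewrite !IHk by lia. ring.
Qed.

Lemma Hq_exc_exact q : forall k u d, (u + d = k)%nat -> (u <= S d)%nat ->
  Hq (fun _ => q) bexc k (Z.of_nat d - Z.of_nat u) = Psi q u d.
Proof.
  intros k; induction k; intros u d Hk Hud.
  - assert (u = 0%nat) by lia; assert (d = 0%nat) by lia; subst.
    simpl. unfold Psi, bexc. simpl. rewrite bn_nn, bn_over by lia. ring.
  - destruct (Nat.eq_dec u (S d)) as [E|E].
    + subst u. rewrite Hq_exc_neg by lia. unfold Psi.
      replace (S d + d)%nat with (S (d + d)) by lia. rewrite bn_sym. ring.
    + simpl Hq. destruct (Z.ltb_spec (Z.of_nat d - Z.of_nat u) 0); [lia|].
      destruct d as [|d'].
      * lia.
      * replace (Z.of_nat (S d') - Z.of_nat u - 1)%Z with (Z.of_nat d' - Z.of_nat u)%Z by lia.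
        rewrite (IHk u d') by lia.
        destruct u as [|u'].
        -- rewrite Hq_exc_far by lia. unfold Psi. simpl plus.
           rewrite !bn_nn, !bn_over by lia. simpl. ring.
        -- replace (Z.of_nat (S d') - Z.of_nat (S u') + 1)%Z with (Z.of_nat (S d') - Z.of_nat u')%Z by lia.
           rewrite (IHk u' (S d')) by lia. unfold Psi.
           replace (S u' + S d')%nat with (S (u' + S d')) by lia.
           replace (S u' + d')%nat with (u' + S d')%nat by lia.
           rewrite (bn_pascal (u' + S d') (S d')), (bn_pascal (u' + S d') d').
           simpl pow. ring.
Qed.

Lemma C_ratio j : Binomial.C (S j + S j) (S (S j)) = Binomial.C (S j + S j) (S j) * INR (S j) / INR (S (S j)).
Proof.
  unfold Binomial.C.
  replace (S j + S j - S (S j))%nat with j by lia.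
  replace (S j + S j - S j)%nat with (S j) by lia.
  rewrite (fact_simpl (S j)), (fact_simpl j), !mult_INR.
  field. repeat split; try apply INR_fact_neq_0; apply not_0_INR; lia.
Qed.

Lemma C_central_step j : Binomial.C (S j + S j) (S j) =
   Binomial.C (j + j) j * (INR (S (j + j)) * INR (S (S (j + j)))) / (INR (S j) * INR (S j)).
Proof.
  unfold Binomial.C.
  replace (S j + S j - S j)%nat with (S j) by lia.
  replace (j + j - j)%nat with j by lia.
  replace (S j + S j)%nat with (S (S (j + j))) by lia.
  rewrite (fact_simpl (S (j+j))), (fact_simpl (j+j)), (fact_simpl j), !mult_INR.
  field. repeat split; try apply INR_fact_neq_0; apply not_0_INR; lia.
Qed.

Lemma C_central_low j : 4 ^ j / INR (S (j + j)) <= Binomial.C (j + j) j.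
Proof.
  induction j.
  - simpl. rewrite C_n0. lra.
  - rewrite C_central_step.
    assert (hx : 0 <= INR j) by apply pos_INR.
    assert (e1 : INR (S (j + j)) = 2 * INR j + 1) by (rewrite S_INR, plus_INR; ring).
    assert (e2 : INR (S (S (j + j))) = 2 * INR j + 2) by (rewrite !S_INR, plus_INR; ring).
    assert (e3 : INR (S j) = INR j + 1) by (rewrite S_INR; ring).
    assert (e4 : INR (S (S j + S j)) = 2 * INR j + 3) by (rewrite S_INR, plus_INR, S_INR; ring).
    rewrite e1 in IHj. rewrite e1, e2, e3, e4.
    set (c := Binomial.C (j + j) j) in *. set (x := INR j) in *.
    assert (hp : 0 < 4 ^ j) by (apply pow_lt; lra).
    assert (hc : 4 ^ j <= c * (2 * x + 1)).
    { apply Rmult_le_reg_r with (/ (2 * x + 1)); [apply Rinv_0_lt_compat; lra|].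
      rewrite Rmult_assoc, Rinv_r, Rmult_1_r by lra. exact IHj. }
    simpl pow.
    apply Rmult_le_reg_r with ((2 * x + 3) * ((x+1)*(x+1))).
    { apply Rmult_lt_0_compat; nra. }
    replace (4 * 4 ^ j / (2 * x + 3) * ((2 * x + 3) * ((x + 1) * (x + 1))))
      with (4 * 4 ^ j * ((x + 1) * (x + 1))) by (field; lra).
    replace (c * ((2 * x + 1) * (2 * x + 2)) / ((x + 1) * (x + 1)) * ((2 * x + 3) * ((x + 1) * (x + 1))))
      with (c * (2 * x + 1) * ((2 * x + 2) * (2 * x + 3))) by (field; lra).
    nra.
Qed.

Lemma Psi_diag_low q j : 0 <= q <= 1 ->
  (4 * q * (1 - q)) ^ j / (INR (S (j + j)) * INR (S j)) <= Psi q j j.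
Proof.
  intros Hq01. unfold Psi.
  assert (e : bn (j + j) j - bn (j + j) (S j) = Binomial.C (j + j) j / INR (S j)).
  { destruct j as [|i].
    - rewrite bn_0, bn_over by lia. simpl. rewrite C_n0. field.
    - unfold bn. destruct (Nat.leb_spec (S i) (S i + S i)); [|lia].
      destruct (Nat.leb_spec (S (S i)) (S i + S i)); [|lia].
      rewrite C_ratio, (S_INR (S i)). pose proof (pos_INR (S i)). field. lra. }
  rewrite e. rewrite !Rpow_mult_distr.
  assert (h0 : 0 < INR (S (j + j))) by (apply lt_0_INR; lia).
  assert (h1 : 0 < INR (S j)) by (apply lt_0_INR; lia).
  pose proof (C_central_low j).
  assert (hq : 0 <= q ^ j * (1 - q) ^ j) by (apply Rmult_le_pos; apply pow_le; lra).
  replace (4 ^ j * q ^ j * (1 - q) ^ j / (INR (S (j + j)) * INR (S j)))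
    with (q ^ j * (1 - q) ^ j * ((4 ^ j / INR (S (j + j))) / INR (S j))) by (field; lra).
  replace (q ^ j * (1 - q) ^ j * (Binomial.C (j + j) j / INR (S j)))
    with (q ^ j * (1 - q) ^ j * (Binomial.C (j + j) j / INR (S j))) by reflexivity.
  apply Rmult_le_compat_l; auto.
  apply Rmult_le_compat_r; [left; apply Rinv_0_lt_compat; lra| auto].
Qed.

Lemma tilt_id u v : 0 < u -> 0 < v ->
  u * exp ((ln v - ln u) / 2) + v * exp (- ((ln v - ln u) / 2)) = exp (ln (4 * u * v) / 2).
Proof.
  intros hu hv.
  rewrite <- (exp_ln u) at 1 by lra. rewrite <- (exp_ln v) at 2 by lra.
  rewrite <- !exp_plus.
  replace (ln u + (ln v - ln u) / 2) with ((ln u + ln v) / 2) by field.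
  replace (ln v + - ((ln v - ln u) / 2)) with ((ln u + ln v) / 2) by field.
  rewrite !ln_mult by lra.
  replace (4) with (2 * 2) by ring. rewrite ln_mult by lra.
  replace ((ln 2 + ln 2 + ln u + ln v) / 2) with (ln 2 + (ln u + ln v) / 2) by field.
  rewrite exp_plus, exp_ln by lra. ring.
Qed.

Lemma ln_ge_1m z : 0 < z -> 1 - / z <= ln z.
Proof.
  intros hz. pose proof (exp_ineq1_le (ln (/ z))) as h.
  rewrite exp_ln in h by (apply Rinv_0_lt_compat; lra).
  rewrite ln_Rinv in h by lra. lra.
Qed.

Lemma gibbs_term a al S : 0 <= a -> 0 < al -> 0 < S ->
  a - al / S - a * ln S <= a * ln (a / al).
Proof.
  intros ha hal hS. destruct (Req_dec a 0) as [->|ha'].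
  - assert (0 <= al / S) by (apply Rdiv_le_0_compat; lra). rewrite Rmult_0_l. lra.
  - assert (ha2 : 0 < a) by lra.
    replace (a / al) with ((a * S / al) * / S) by (field; lra).
    rewrite ln_mult, ln_Rinv; try lra.
    2: { apply Rdiv_lt_0_compat; [apply Rmult_lt_0_compat|]; lra. }
    2: { apply Rinv_0_lt_compat; lra. }
    pose proof (ln_ge_1m (a * S / al)) as h.
    assert (0 < a * S / al) by (apply Rdiv_lt_0_compat; [apply Rmult_lt_0_compat|]; lra).
    specialize (h H).
    replace (/ (a * S / al)) with (al / (a * S)) in h by (field; lra).
    apply Rmult_le_compat_l with (r := a) in h; [|lra].
    replace (a * (1 - al / (a * S))) with (a - al / S) in h by (field; lra).
    lra.
Qed.

Lemma term_shift b c lam : 0 <= b -> 0 < c ->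
  b * ln (b / (c * exp lam)) = b * ln (b / c) - b * lam.
Proof.
  intros hb hc. destruct (Req_dec b 0) as [->|hb']; [ring|].
  replace (b / (c * exp lam)) with ((b / c) * exp (- lam)).
  2: { rewrite exp_Ropp. field. split; [apply Rgt_not_eq, exp_pos| lra]. }
  rewrite ln_mult, ln_exp; [ring| apply Rdiv_lt_0_compat; lra| apply exp_pos].
Qed.

Lemma ICr_gibbs q x v lam : 0 < q < 1 -> ICr q x = Finite v ->
  - ln (q * exp (- lam) + (1 - q) * exp lam) - lam * x <= v.
Proof.
  intros hq H. unfold ICr in H.
  destruct (Rle_dec (-1) x); [|discriminate]. destruct (Rle_dec x 1); [|discriminate].
  injection H as <-.
  set (a := (1 + x) / 2). set (b := (1 - x) / 2).
  assert (ha : 0 <= a) by (unfold a; lra). assert (hb : 0 <= b) by (unfold b; lra).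
  replace ((1 - x) / (2 * (1 - q))) with (b / (1 - q)) by (unfold b; field; lra).
  replace ((1 + x) / (2 * q)) with (a / q) by (unfold a; field; lra).
  fold a b.
  set (S := q * exp (- lam) + (1 - q) * exp lam).
  assert (hS : 0 < S).
  { unfold S. pose proof (exp_pos lam). pose proof (exp_pos (- lam)). nra. }
  pose proof (gibbs_term a (q * exp (- lam)) S ha) as g1.
  pose proof (gibbs_term b ((1 - q) * exp lam) S hb) as g2.
  assert (0 < q * exp (- lam)) by (apply Rmult_lt_0_compat; [lra| apply exp_pos]).
  assert (0 < (1 - q) * exp lam) by (apply Rmult_lt_0_compat; [lra| apply exp_pos]).
  specialize (g1 H hS). specialize (g2 H0 hS).
  rewrite term_shift in g1, g2 by lra.
  assert (hab : a + b = 1) by (unfold a, b; field).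
  assert (e1 : q * exp (- lam) / S + (1 - q) * exp lam / S = 1) by (unfold S; field; lra).
  assert (e2 : a * ln S + b * ln S = ln S) by (rewrite <- Rmult_plus_distr_r, hab; ring).
  assert (e3 : lam * x = a * lam - b * lam) by (unfold a, b; field).
  assert (e4 : a * - lam = - (a * lam)) by ring.
  rewrite e4 in g1. lra.
Qed.

Lemma ICr_0 q : 0 < q < 1 -> ICr q 0 = Finite (- (ln (4 * q * (1 - q)) / 2)).
Proof.
  intros hq. unfold ICr.
  destruct (Rle_dec (-1) 0); [|lra]. destruct (Rle_dec 0 1); [|lra].
  f_equal.
  replace ((1 - 0) / (2 * (1 - q))) with (/ (2 * (1 - q))) by (field; lra).
  replace ((1 + 0) / (2 * q)) with (/ (2 * q)) by (field; lra).
  rewrite (ln_Rinv (2 * (1 - q))), (ln_Rinv (2 * q)) by lra.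
  replace (4 * q * (1 - q)) with ((2 * (1 - q)) * (2 * q)) by ring.
  rewrite (ln_mult (2 * (1 - q)) (2 * q)) by lra. field.
Qed.

Lemma ICr_opt q : 0 < q < 1 -> ICr q (2 * q - 1) = Finite 0.
Proof.
  intros hq. unfold ICr.
  destruct (Rle_dec (-1) (2 * q - 1)); [|lra]. destruct (Rle_dec (2 * q - 1) 1); [|lra].
  f_equal.
  replace ((1 - (2 * q - 1)) / (2 * (1 - q))) with 1 by (field; lra).
  replace ((1 + (2 * q - 1)) / (2 * q)) with 1 by (field; lra).
  rewrite ln_1. ring.
Qed.

Lemma glb_eq (E : R -> Prop) m : E m -> (forall y, E y -> m <= y) -> Glb_Rbar E = Finite m.
Proof.
  intros hm hl. apply is_glb_Rbar_unique. split.
  - intros y hy. simpl. apply hl, hy.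
  - intros b hb. apply hb, hm.
Qed.

Lemma lub_le_M (E : R -> Prop) M : 0 <= M -> (forall y, E y -> y <= M) -> real (Lub_Rbar E) <= M.
Proof.
  intros hM hE. destruct (Lub_Rbar_correct E) as [ub lub].
  assert (h : Rbar_le (Lub_Rbar E) (Finite M)) by (apply lub; intros y hy; simpl; auto).
  destruct (Lub_Rbar E); simpl in *; lra || contradiction.
Qed.

Lemma le_lub (E : R -> Prop) M y : E y -> (forall z, E z -> z <= M) -> y <= real (Lub_Rbar E).
Proof.
  intros hy hE. destruct (Lub_Rbar_correct E) as [ub lub].
  assert (h : Rbar_le (Lub_Rbar E) (Finite M)) by (apply lub; intros z hz; simpl; auto).
  specialize (ub y hy).
  destruct (Lub_Rbar E); simpl in *; lra || contradiction.
Qed.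

Section GS.
Variables (p : Z -> R) (pm pp : R).
Hypothesis hp : forall k, 0 < p k < 1.
Hypothesis hpm : 0 < pm < 1.
Hypothesis hpp : 0 < pp < 1.

Lemma psig_01 s : 0 < psig pm pp s < 1.
Proof. destruct s; simpl; auto. Qed.

Lemma Gsup_ge s eps k : (sz s * k >= RZ eps)%Z ->
  Rabs (p k - psig pm pp s) <= Gsup p pm pp s eps.
Proof.
  intros hk. unfold Gsup. apply le_lub with (M := 1).
  - exists k; split; auto.
  - intros z [k' [_ ->]]. pose proof (hp k'). pose proof (psig_01 s).
    apply Rabs_le; lra.
Qed.

Lemma min_pos s : 0 < Rmin (psig pm pp s) (1 - psig pm pp s).
Proof. pose proof (psig_01 s). apply Rmin_glb_lt; lra. Qed.

Lemma Gsup_le_G s eps : / Rmin (psig pm pp s) (1 - psig pm pp s) * Gsup p pm pp s eps <= G p pm pp eps.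
Proof. unfold G. destruct s; [apply Rmax_l| apply Rmax_r]. Qed.

Lemma G_bound s eps k : (sz s * k >= RZ eps)%Z ->
  Rabs (p k - psig pm pp s) <= G p pm pp eps * Rmin (psig pm pp s) (1 - psig pm pp s).
Proof.
  intros hk. pose proof (Gsup_ge s eps k hk). pose proof (Gsup_le_G s eps).
  pose proof (min_pos s).
  apply Rmult_le_compat_r with (r := Rmin (psig pm pp s) (1 - psig pm pp s)) in H0; [|lra].
  replace (/ Rmin (psig pm pp s) (1 - psig pm pp s) * Gsup p pm pp s eps *
     Rmin (psig pm pp s) (1 - psig pm pp s)) with (Gsup p pm pp s eps) in H0 by (field; lra).
  lra.
Qed.

Lemma G_nonneg eps : 0 <= G p pm pp eps.
Proof.
  pose proof (G_bound Plus eps (Z.max (RZ eps) 0)) as h.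
  assert (hk : (sz Plus * Z.max (RZ eps) 0 >= RZ eps)%Z) by (unfold sz; lia).
  specialize (h hk). pose proof (Rabs_pos (p (Z.max (RZ eps) 0) - psig pm pp Plus)).
  pose proof (min_pos Plus).
  destruct (Rle_lt_dec 0 (G p pm pp eps)); auto. nra.
Qed.

Lemma ceilZ_ge t : t <= IZR (ceilZ t).
Proof.
  unfold ceilZ. rewrite opp_IZR. destruct (base_Int_part (- t)). lra.
Qed.

Hypothesis hlm : is_lim_seq (fun n : nat => p (- Z.of_nat n)%Z) pm.
Hypothesis hlp : is_lim_seq (fun n : nat => p (Z.of_nat n)) pp.

Lemma G_small eta : 0 < eta -> exists del, 0 < del /\
  forall eps, 0 < eps < del -> G p pm pp eps <= eta.
Proof.
  intros heta.
  set (mm := Rmin (Rmin pm (1 - pm)) (Rmin pp (1 - pp))).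
  assert (hmm : 0 < mm) by (unfold mm; repeat apply Rmin_glb_lt; lra).
  assert (he : 0 < eta * mm) by nra.
  apply is_lim_seq_spec in hlm. apply is_lim_seq_spec in hlp.
  destruct (hlm (mkposreal _ he)) as [N1 h1].
  destruct (hlp (mkposreal _ he)) as [N2 h2].
  simpl in h1, h2.
  set (N := Nat.max N1 N2).
  exists (exp (- (INR N * ln 2))). split; [apply exp_pos|].
  intros eps [he0 he1].
  assert (hRZ : (Z.of_nat N <= RZ eps)%Z).
  { unfold RZ. pose proof (ceilZ_ge (ln (/ eps) / ln 2)) as hc.
    assert (hl2 : 0 < ln 2) by (rewrite <- ln_1; apply ln_increasing; lra).
    assert (INR N < ln (/ eps) / ln 2).
    { rewrite ln_Rinv by lra.
      apply Rmult_lt_reg_r with (ln 2); auto.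
      replace (- ln eps / ln 2 * ln 2) with (- ln eps) by (field; lra).
      apply ln_increasing in he1; auto. rewrite ln_exp in he1. lra. }
    rewrite INR_IZR_INZ in H.
    assert (Z.of_nat N - 1 < ceilZ (ln (/ eps) / ln 2))%Z.
    { apply lt_IZR. rewrite minus_IZR. simpl. lra. }
    lia. }
  assert (hs : forall s, Gsup p pm pp s eps <= eta * mm).
  { intros s. unfold Gsup. apply lub_le_M; [lra|].
    intros z [k [hk ->]]. destruct s; simpl psig; unfold sz in hk.
    - assert (k = (- Z.of_nat (Z.to_nat (- k)))%Z) by lia.
      rewrite H. left. apply h1. lia.
    - assert (k = Z.of_nat (Z.to_nat k)) by lia.
      rewrite H. left. apply h2. lia. }
  unfold G. apply Rmax_lub.
  - pose proof (min_pos Minus). pose proof (hs Minus). simpl psig in *.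
    assert (mm <= Rmin pm (1 - pm)) by apply Rmin_l.
    apply Rle_trans with (/ Rmin pm (1 - pm) * (eta * mm)).
    + apply Rmult_le_compat_l; [left; apply Rinv_0_lt_compat; lra| auto].
    + apply Rmult_le_reg_l with (Rmin pm (1 - pm)); [lra|].
      rewrite <- Rmult_assoc, Rinv_r, Rmult_1_l by lra. nra.
  - pose proof (min_pos Plus). pose proof (hs Plus). simpl psig in *.
    assert (mm <= Rmin pp (1 - pp)) by apply Rmin_r.
    apply Rle_trans with (/ Rmin pp (1 - pp) * (eta * mm)).
    + apply Rmult_le_compat_l; [left; apply Rinv_0_lt_compat; lra| auto].
    + apply Rmult_le_reg_l with (Rmin pp (1 - pp)); [lra|].
      rewrite <- Rmult_assoc, Rinv_r, Rmult_1_l by lra. nra.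
Qed.

Lemma g_lim : filterlim (fun eps => - ln (1 - G p pm pp eps)) (at_right 0) (locally 0).
Proof.
  apply filterlim_locally. intros e.
  destruct (G_small (Rmin (1/2) (e / 4))) as [del [hdel hG]].
  { apply Rmin_glb_lt; [lra| pose proof (cond_pos e); lra]. }
  exists (mkposreal _ hdel). intros y hy hy0.
  change (Rabs (- ln (1 - G p pm pp y) - 0) < e).
  assert (hy' : 0 < y < del).
  { split; auto. change (Rabs (y - 0) < del) in hy. rewrite Rminus_0_r, Rabs_right in hy by lra. lra. }
  specialize (hG y hy'). pose proof (G_nonneg y).
  set (t := G p pm pp y) in *.
  assert (ht1 : t <= 1/2) by (pose proof (Rmin_l (1/2) (e/4)); lra).
  assert (ht2 : t <= e / 4) by (pose proof (Rmin_r (1/2) (e/4)); lra).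
  assert (l1 : ln (1 - t) <= 0) by (rewrite <- ln_1; apply ln_le; lra).
  assert (l2 : 1 - / (1 - t) <= ln (1 - t)).
  { pose proof (exp_ineq1_le (ln (/ (1 - t)))) as h.
    rewrite exp_ln in h by (apply Rinv_0_lt_compat; lra).
    rewrite ln_Rinv in h by lra. lra. }
  assert (l3 : / (1 - t) <= 2) by (apply Rmult_le_reg_l with (1 - t); [lra|]; rewrite Rinv_r; lra).
  assert (l4 : 1 - / (1 - t) = - t / (1 - t)) by (field; lra).
  assert (l5 : t / (1 - t) <= 2 * t).
  { unfold Rdiv. rewrite Rmult_comm. apply Rmult_le_compat_r; lra. }
  rewrite Rminus_0_r, Rabs_right by lra.
  pose proof (cond_pos e). unfold Rdiv in l4. lra.
Qed.

End GS.

Lemma lim_inv_n : is_lim_seq (fun n => / INR n) 0.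
Proof.
  replace (Finite 0) with (Rbar_inv p_infty) by reflexivity.
  apply is_lim_seq_inv. apply is_lim_seq_INR. discriminate.
Qed.

Lemma lim_cinv c : is_lim_seq (fun n => c * / INR n) 0.
Proof.
  pose proof (is_lim_seq_mult' _ _ _ _ (is_lim_seq_const c) lim_inv_n) as h. rewrite Rmult_0_r in h. exact h.
Qed.

Lemma lim_ln_n : is_lim_seq (fun n => ln (INR n + 2) / INR n) 0.
Proof.
  assert (h1 : is_lim_seq (fun n => INR n + 2) p_infty).
  { apply is_lim_seq_ext with (fun n => INR (n + 2)).
    - intros n. rewrite plus_INR. simpl. ring.
    - apply (is_lim_seq_incr_n INR 2 p_infty). apply is_lim_seq_INR. }
  assert (h2 : is_lim_seq (fun n => ln (INR n + 2) / (INR n + 2)) 0).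
  { apply (filterlim_comp nat R R (fun n => INR n + 2) (fun y => ln y / y) eventually (Rbar_locally p_infty) (Rbar_locally 0)); [exact h1|]. apply is_lim_div_ln_p. }
  assert (h3 : is_lim_seq (fun n => 1 + 2 * / INR n) 1).
  { pose proof (is_lim_seq_plus' _ _ _ _ (is_lim_seq_const 1) (lim_cinv 2)) as h. rewrite Rplus_0_r in h. exact h. }
  replace (Finite 0) with (Finite (0 * 1)) by (f_equal; ring).
  eapply is_lim_seq_ext_loc; [| apply is_lim_seq_mult'; [exact h2| exact h3]].
  exists 1%nat. intros n hn. simpl.
  assert (0 < INR n) by (apply lt_0_INR; lia).
  field. lra.
Qed.

Lemma half_bounds n : (n <= 2 * ((n + 1) / 2) <= n + 1)%nat.
Proof.
  pose proof (Nat.div_mod (n + 1) 2 ltac:(lia)). pose proof (Nat.mod_upper_bound (n+1) 2 ltac:(lia)).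
  lia.
Qed.

Lemma lim_up (u : nat -> R) A :
  (forall n, (1 <= n)%nat -> u n <= INR ((n + 1) / 2 + (n + 1) / 2) * A / INR n) ->
  Rbar_le (LimSup_seq u) (Finite A).
Proof.
  intros H.
  apply Rbar_le_trans with (LimSup_seq (fun n => A + Rabs A * / INR n)).
  - apply LimSup_le. exists 1%nat. intros n hn. eapply Rle_trans; [apply H; lia|].
    pose proof (half_bounds n).
    assert (hn0 : 0 < INR n) by (apply lt_0_INR; lia).
    set (k := ((n + 1) / 2 + (n + 1) / 2)%nat).
    assert (hk : k = n \/ k = S n) by (unfold k; lia).
    apply Rmult_le_reg_r with (INR n); auto.
    unfold Rdiv. rewrite Rmult_assoc, Rinv_l, Rmult_1_r by lra.
    rewrite Rmult_plus_distr_r, Rmult_assoc, Rinv_l, Rmult_1_r by lra.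
    destruct hk as [-> | ->].
    + pose proof (Rabs_pos A). nra.
    + rewrite S_INR. pose proof (Rle_abs A). nra.
  - rewrite (is_LimSup_seq_unique _ A); [apply Rbar_le_refl|].
    apply is_lim_LimSup_seq.
    pose proof (is_lim_seq_plus' _ _ _ _ (is_lim_seq_const A) (lim_cinv (Rabs A))) as h. rewrite Rplus_0_r in h. exact h.
Qed.

Lemma lim_low (u : nat -> R) A B :
  (forall n, (1 <= n)%nat ->
     (INR ((n + 1) / 2 + (n + 1) / 2) * A + B
        - ln (INR (S ((n + 1) / 2 + (n + 1) / 2)) * INR (S ((n + 1) / 2)))) / INR n <= u n) ->
  Rbar_le (Finite A) (LimInf_seq u).
Proof.
  intros H.
  apply Rbar_le_trans with (LimInf_seq (fun n => A - (Rabs A + Rabs B) * / INR n - 2 * (ln (INR n + 2) / INR n))).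
  - rewrite (is_LimInf_seq_unique _ A); [apply Rbar_le_refl|].
    apply is_lim_LimInf_seq.
    pose proof (is_lim_seq_minus' _ _ _ _ (is_lim_seq_minus' _ _ _ _ (is_lim_seq_const A) (lim_cinv (Rabs A + Rabs B)))
       (is_lim_seq_mult' _ _ _ _ (is_lim_seq_const 2) lim_ln_n)) as h.
    replace (A - 0 - 2 * 0) with A in h by ring. exact h.
  - apply LimInf_le. exists 1%nat. intros n hn. eapply Rle_trans; [|apply H; lia].
    pose proof (half_bounds n).
    assert (hn0 : 0 < INR n) by (apply lt_0_INR; lia).
    set (j := ((n + 1) / 2)%nat) in *.
    assert (hk : (j + j = n \/ j + j = S n)%nat) by lia.
    assert (hpoly : ln (INR (S (j + j)) * INR (S j)) <= 2 * ln (INR n + 2)).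
    { replace (2 * ln (INR n + 2)) with (ln ((INR n + 2) * (INR n + 2))).
      2: { rewrite ln_mult by lra. ring. }
      apply ln_le.
      - apply Rmult_lt_0_compat; apply lt_0_INR; lia.
      - assert (INR (S (j + j)) <= INR n + 2).
        { replace (INR n + 2) with (INR (n + 2)) by (rewrite plus_INR; simpl; ring). apply le_INR; lia. }
        assert (INR (S j) <= INR n + 2).
        { replace (INR n + 2) with (INR (n + 2)) by (rewrite plus_INR; simpl; ring). apply le_INR; lia. }
        apply Rmult_le_compat; auto; apply pos_INR. }
    apply Rmult_le_reg_r with (INR n); auto.
    unfold Rdiv. rewrite Rmult_assoc, Rinv_l, Rmult_1_r by lra.
    replace ((A - (Rabs A + Rabs B) * / INR n - 2 * (ln (INR n + 2) * / INR n)) * INR n)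
      with (A * INR n - (Rabs A + Rabs B) - 2 * ln (INR n + 2)) by (field; lra).
    pose proof (Rle_abs B). pose proof (Rle_abs (- B)). rewrite Rabs_Ropp in *.
    destruct hk as [e | e]; rewrite e in *.
    + pose proof (Rabs_pos A). lra.
    + rewrite S_INR. pose proof (Rle_abs (- A)). rewrite Rabs_Ropp in *. lra.
Qed.

Definition qout (s : sgn) (q : R) : R := match s with Plus => q | Minus => 1 - q end.

Section Core.
Variables (p : Z -> R) (pm pp eps : R) (Rad : nat) (s : sgn).
Hypothesis hp : forall k, 0 < p k < 1.
Hypothesis hpm : 0 < pm < 1.
Hypothesis hpp : 0 < pp < 1.
Hypothesis hRZ : (Z.of_nat Rad >= RZ eps)%Z.
Hypothesis hG1 : G p pm pp eps < 1.

Let q := psig pm pp s.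
Let Gv := G p pm pp eps.
Let qo := qout s q.
Let L := ln (4 * q * (1 - q)) / 2.
Let P' := fun y => Pout p s (Xy s Rad y).

Lemma q01 : 0 < q < 1.
Proof. unfold q; destruct s; simpl; auto. Qed.

Lemma qo01 : 0 < qo < 1.
Proof. pose proof q01. unfold qo; destruct s; simpl; lra. Qed.

Lemma qo_prod : 4 * qo * (1 - qo) = 4 * q * (1 - q).
Proof. unfold qo; destruct s; simpl; ring. Qed.

Lemma Gv0 : 0 <= Gv.
Proof. apply G_nonneg; auto. Qed.

Lemma P01 y : 0 <= P' y <= 1.
Proof. unfold P', Pout. pose proof (hp (Xy s Rad y)). destruct s; lra. Qed.

Lemma Pbounds y : (0 <= y)%Z ->
  qo * (1 - Gv) <= P' y <= qo * (1 + Gv) /\ (1 - qo) * (1 - Gv) <= 1 - P' y <= (1 - qo) * (1 + Gv).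
Proof.
  intros hy.
  assert (hk : (sz s * Xy s Rad y >= RZ eps)%Z) by (unfold Xy; rewrite sz_sq; lia).
  pose proof (G_bound p pm pp hp hpm hpp s eps _ hk) as h. fold q Gv in h.
  pose proof Gv0. pose proof q01.
  pose proof (Rmin_l q (1 - q)). pose proof (Rmin_r q (1 - q)).
  set (m := Rmin q (1 - q)) in *.
  apply Rabs_le_between in h.
  assert (Gv * m <= Gv * q) by (apply Rmult_le_compat_l; lra).
  assert (Gv * m <= Gv * (1 - q)) by (apply Rmult_le_compat_l; lra).
  unfold P', qo, Pout, qout. destruct s; simpl; split; split; nra.
Qed.

Lemma Hq_upper_gen b lam :
  (forall y, b y <= exp (lam * IZR y)) ->
  lam = (ln (1 - qo) - ln qo) / 2 ->
  forall k, Hq P' b k 0 <= ((1 + Gv) * exp L) ^ k.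
Proof.
  intros hb hlam k. pose proof qo01. pose proof Gv0.
  eapply Rle_trans; [apply Hq_upper with (lam := lam) (K := (1 + Gv) * exp L)|].
  - intros y hy. split; [apply P01|].
    destruct (Pbounds y hy) as [[a1 a2] [b1 b2]].
    pose proof (exp_pos lam). pose proof (exp_pos (- lam)).
    apply Rle_trans with ((1 + Gv) * (qo * exp lam + (1 - qo) * exp (- lam))).
    + nra.
    + rewrite hlam. rewrite tilt_id by lra. rewrite qo_prod. unfold L. lra.
  - pose proof (exp_pos L). nra.
  - exact hb.
  - simpl IZR. rewrite Rmult_0_r, exp_0, Rmult_1_r. lra.
Qed.

Lemma exc_upper k : Hq P' bexc k 0 <= ((1 + Gv) * exp L) ^ k.
Proof.
  apply Hq_upper_gen with (lam := (ln (1 - qo) - ln qo) / 2); [|reflexivity].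
  intros y. unfold bexc. destruct (Z.eqb_spec y 0).
  - subst. simpl. rewrite Rmult_0_r, exp_0. lra.
  - left; apply exp_pos.
Qed.

Lemma mea_upper_good k : qo <= 1/2 -> Hq P' bmea k 0 <= ((1 + Gv) * exp L) ^ k.
Proof.
  intros hq. pose proof qo01.
  apply Hq_upper_gen with (lam := (ln (1 - qo) - ln qo) / 2); [|reflexivity].
  assert (hl : 0 <= (ln (1 - qo) - ln qo) / 2).
  { assert (ln qo <= ln (1 - qo)) by (apply ln_le; lra). lra. }
  intros y. unfold bmea. destruct (Z.ltb_spec y 0).
  - left; apply exp_pos.
  - pose proof (exp_ineq1_le (((ln (1 - qo) - ln qo) / 2) * IZR y)).
    assert (0 <= IZR y) by (apply IZR_le; lia).
    assert (0 <= (ln (1 - qo) - ln qo) / 2 * IZR y) by (apply Rmult_le_pos; lra). lra.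
Qed.

Lemma mea_upper_bad k : Hq P' bmea k 0 <= 1.
Proof.
  eapply Rle_trans; [apply Hq_upper with (lam := 0) (K := 1)|].
  - intros y _. split; [apply P01|]. rewrite Ropp_0, exp_0. lra.
  - lra.
  - intros y. rewrite Rmult_0_l, exp_0. unfold bmea. destruct (y <? 0)%Z; lra.
  - rewrite pow1, Rmult_0_l, exp_0. lra.
Qed.

Lemma P'_compare : forall y, (0 <= y)%Z -> (1 - Gv) * qo <= P' y /\ (1 - Gv) * (1 - qo) <= 1 - P' y.
Proof. intros y hy. destruct (Pbounds y hy) as [[a1 a2] [b1 b2]]. split; nra. Qed.

Lemma exc_lower j :
  (1 - Gv) ^ (j + j) * ((4 * q * (1 - q)) ^ j / (INR (S (j + j)) * INR (S j))) <= Hq P' bexc (j + j) 0.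
Proof.
  pose proof qo01. pose proof Gv0. assert (hGv : Gv < 1) by exact hG1.
  eapply Rle_trans; [|apply (Hq_compare P' qo bexc (1 - Gv))]; auto.
  - apply Rmult_le_compat_l; [apply pow_le; lra|].
    rewrite <- qo_prod. replace 0%Z with (Z.of_nat j - Z.of_nat j)%Z by lia.
    rewrite (Hq_exc_exact qo (j + j) j j) by lia.
    replace (4 * qo * (1 - qo)) with (4 * qo * (1 - qo)) by reflexivity.
    apply Psi_diag_low. lra.
  - apply P01.
  - lra.
  - apply bexc_nonneg.
  - lra.
  - apply P'_compare.
Qed.

Lemma mea_lower_bad k : 1/2 < qo -> (1 - Gv) ^ k * (1 - (1 - qo) / qo) <= Hq P' bmea k 0.
Proof.
  intros hq. pose proof qo01. pose proof Gv0. assert (hGv : Gv < 1) by exact hG1.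
  eapply Rle_trans; [|apply (Hq_compare P' qo bmea (1 - Gv))]; auto.
  - apply Rmult_le_compat_l; [apply pow_le; lra|].
    pose proof (Hq_mea_low qo ltac:(lra) k 0) as h. simpl in h. rewrite Rmult_1_r in h. exact h.
  - apply P01.
  - lra.
  - apply bmea_nonneg.
  - lra.
  - apply P'_compare.
Qed.

Lemma mea_ge_exc k : Hq P' bexc k 0 <= Hq P' bmea k 0.
Proof. apply Hq_mono_b; [apply P01| apply bexc_le_bmea]. Qed.


Lemma poly_pos j : 0 < INR (S (j + j)) * INR (S j).
Proof. apply Rmult_lt_0_compat; apply lt_0_INR; lia. Qed.

Lemma poly_ge1 j : 0 <= ln (INR (S (j + j)) * INR (S j)).
Proof.
  rewrite <- ln_1. apply ln_le; [lra|].
  rewrite <- (Rmult_1_l 1). apply Rmult_le_compat; try lra; replace 1 with (INR 1) by reflexivity; apply le_INR; lia.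
Qed.

Lemma X_pos : 0 < 4 * q * (1 - q).
Proof. pose proof q01. nra. Qed.

Lemma exc_lower_pos j : 0 < (1 - Gv) ^ (j + j) * ((4 * q * (1 - q)) ^ j / (INR (S (j + j)) * INR (S j))).
Proof.
  assert (hGv : Gv < 1) by exact hG1.
  apply Rmult_lt_0_compat; [apply pow_lt; lra|].
  apply Rdiv_lt_0_compat; [apply pow_lt, X_pos| apply poly_pos].
Qed.

Lemma ln_lower_val j :
  ln ((1 - Gv) ^ (j + j) * ((4 * q * (1 - q)) ^ j / (INR (S (j + j)) * INR (S j)))) =
  INR (j + j) * (ln (1 - Gv) + L) + 0 - ln (INR (S (j + j)) * INR (S j)).
Proof.
  assert (hGv : Gv < 1) by exact hG1.
  pose proof X_pos. pose proof (poly_pos j).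
  unfold Rdiv. rewrite ln_mult, ln_mult, ln_Rinv, !ln_pow.
  all: first [ unfold L; rewrite plus_INR; field | lra | apply pow_lt; lra | apply Rinv_0_lt_compat; lra
             | apply Rmult_lt_0_compat; [apply pow_lt; lra| apply Rinv_0_lt_compat; lra] ].
Qed.

Lemma ln_upper_val k : ln (((1 + Gv) * exp L) ^ k) = INR k * (ln (1 + Gv) + L).
Proof.
  pose proof Gv0. rewrite ln_pow, ln_mult, ln_exp; try lra.
  - apply exp_pos.
  - apply Rmult_lt_0_compat; [lra| apply exp_pos].
Qed.

Lemma ln_exc_up j : ln (Hq P' bexc (j + j) 0) <= INR (j + j) * (ln (1 + Gv) + L).
Proof.
  rewrite <- ln_upper_val. apply ln_le; [|apply exc_upper].
  eapply Rlt_le_trans; [apply exc_lower_pos| apply exc_lower].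
Qed.

Lemma ln_exc_low j : INR (j + j) * (ln (1 - Gv) + L) + 0 - ln (INR (S (j + j)) * INR (S j)) <=
  ln (Hq P' bexc (j + j) 0).
Proof. rewrite <- ln_lower_val. apply ln_le; [apply exc_lower_pos| apply exc_lower]. Qed.

Lemma ln_mea_up_good j : qo <= 1/2 -> ln (Hq P' bmea (j + j) 0) <= INR (j + j) * (ln (1 + Gv) + L).
Proof.
  intros hq. rewrite <- ln_upper_val. apply ln_le; [|apply mea_upper_good; auto].
  eapply Rlt_le_trans; [apply exc_lower_pos|]. eapply Rle_trans; [apply exc_lower| apply mea_ge_exc].
Qed.

Lemma ln_mea_low_good j : INR (j + j) * (ln (1 - Gv) + L) + 0 - ln (INR (S (j + j)) * INR (S j)) <=
  ln (Hq P' bmea (j + j) 0).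
Proof.
  rewrite <- ln_lower_val. apply ln_le; [apply exc_lower_pos|].
  eapply Rle_trans; [apply exc_lower| apply mea_ge_exc].
Qed.

Lemma mea_bad_pos j : 1/2 < qo -> 0 < (1 - Gv) ^ (j + j) * (1 - (1 - qo) / qo).
Proof.
  intros hq. assert (hGv : Gv < 1) by exact hG1. pose proof qo01.
  apply Rmult_lt_0_compat; [apply pow_lt; lra|].
  assert ((1 - qo) / qo < 1) by (apply Rmult_lt_reg_r with qo; [lra|]; unfold Rdiv; rewrite Rmult_assoc, Rinv_l; lra).
  lra.
Qed.

Lemma ln_mea_up_bad j : 1/2 < qo -> ln (Hq P' bmea (j + j) 0) <= INR (j + j) * 0.
Proof.
  intros hq. rewrite Rmult_0_r, <- ln_1. apply ln_le; [|apply mea_upper_bad].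
  eapply Rlt_le_trans; [apply (mea_bad_pos j hq)| apply mea_lower_bad; auto].
Qed.

Lemma ln_mea_low_bad j : 1/2 < qo ->
  INR (j + j) * ln (1 - Gv) + ln (1 - (1 - qo) / qo) - ln (INR (S (j + j)) * INR (S j)) <=
  ln (Hq P' bmea (j + j) 0).
Proof.
  intros hq. assert (hGv : Gv < 1) by exact hG1. pose proof (mea_bad_pos j hq).
  pose proof (poly_ge1 j).
  apply Rle_trans with (ln ((1 - Gv) ^ (j + j) * (1 - (1 - qo) / qo))).
  - assert (h1 : 0 < (1 - Gv) ^ (j + j)) by (apply pow_lt; lra).
    assert (h2 : 0 < 1 - (1 - qo) / qo).
    { apply Rmult_lt_reg_l with ((1 - Gv) ^ (j + j)); [lra|]. lra. }
    rewrite (ln_mult ((1 - Gv) ^ (j + j)) (1 - (1 - qo) / qo)) by lra. rewrite ln_pow by lra. lra.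
  - apply ln_le; auto. apply mea_lower_bad; auto.
Qed.

Lemma ICr_inf_good : qo <= 1/2 -> ICr_inf q s = Finite (- L).
Proof.
  intros hq. pose proof q01. unfold ICr_inf. apply glb_eq.
  - exists 0. split; [rewrite Rmult_0_r; lra|]. rewrite ICr_0 by lra. reflexivity.
  - intros y [x [hx hI]].
    pose proof (ICr_gibbs q x y (- ((ln (1 - q) - ln q) / 2)) H hI) as h.
    rewrite Ropp_involutive in h. rewrite tilt_id in h by lra. rewrite ln_exp in h.
    fold L in h.
    assert (- ((ln (1 - q) - ln q) / 2) * x <= 0).
    { unfold qo, qout, q in *. destruct s; unfold sR, sz in hx; simpl IZR in hx.
      - assert (ln (1 - psig pm pp Minus) <= ln (psig pm pp Minus)) by (apply ln_le; simpl in *; lra).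
        nra.
      - assert (ln (psig pm pp Plus) <= ln (1 - psig pm pp Plus)) by (apply ln_le; simpl in *; lra).
        nra. }
    lra.
Qed.

Lemma ICr_inf_bad : 1/2 < qo -> ICr_inf q s = Finite 0.
Proof.
  intros hq. pose proof q01. unfold ICr_inf. apply glb_eq.
  - exists (2 * q - 1). split; [|apply ICr_opt; lra].
    unfold qo, qout, q in *. destruct s; unfold sR, sz; simpl IZR; simpl in *; lra.
  - intros y [x [hx hI]].
    pose proof (ICr_gibbs q x y 0 H hI) as h.
    rewrite Ropp_0, exp_0, !Rmult_1_r, Rmult_0_l in h.
    replace (q + (1 - q)) with 1 in h by ring. rewrite ln_1 in h. lra.
Qed.

Let excs := fun n : nat =>
  ln (Pw p (sz s * Z.of_nat Rad) (mlen n) (Omega_exc s Rad (mlen n))) / INR n.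
Let meas := fun n : nat =>
  ln (Pw p (sz s * Z.of_nat Rad) (mlen n) (Omega_mea s Rad (mlen n))) / INR n.

Lemma mlen_eq n : (mlen n - 1 = (n + 1) / 2 + (n + 1) / 2)%nat.
Proof. unfold mlen. lia. Qed.

Lemma exc_seq n : (1 <= n)%nat -> excs n = ln (Hq P' bexc ((n + 1) / 2 + (n + 1) / 2) 0) / INR n.
Proof.
  intros hn. unfold excs. rewrite Pw_exc_Hq by (unfold mlen; lia). rewrite mlen_eq. reflexivity.
Qed.

Lemma mea_seq n : (1 <= n)%nat -> meas n = ln (Hq P' bmea ((n + 1) / 2 + (n + 1) / 2) 0) / INR n.
Proof.
  intros hn. unfold meas. rewrite Pw_mea_Hq by (unfold mlen; lia). rewrite mlen_eq. reflexivity.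
Qed.

Lemma div_le a b n : (1 <= n)%nat -> a <= b -> a / INR n <= b / INR n.
Proof.
  intros hn h. assert (0 < INR n) by (apply lt_0_INR; lia).
  apply Rmult_le_compat_r; [left; apply Rinv_0_lt_compat; lra| exact h].
Qed.

Lemma ln1pG : ln (1 + Gv) <= - ln (1 - Gv).
Proof.
  assert (hGv : Gv < 1) by exact hG1. pose proof Gv0.
  assert (ln ((1 + Gv) * (1 - Gv)) <= 0).
  { rewrite <- ln_1. apply ln_le; nra. }
  rewrite ln_mult in H0 by lra. lra.
Qed.

Lemma core_result :
  Rbar_le (Rbar_minus (Rbar_opp (ICr q 0)) (Finite (- ln (1 - Gv)))) (LimInf_seq excs) /\
  Rbar_le (LimInf_seq excs) (LimSup_seq excs) /\
  Rbar_le (LimSup_seq excs) (Rbar_plus (Rbar_opp (ICr q 0)) (Finite (- ln (1 - Gv)))) /\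
  Rbar_le (Rbar_minus (Rbar_opp (ICr_inf q s)) (Finite (- ln (1 - Gv)))) (LimInf_seq meas) /\
  Rbar_le (LimInf_seq meas) (LimSup_seq meas) /\
  Rbar_le (LimSup_seq meas) (Rbar_plus (Rbar_opp (ICr_inf q s)) (Finite (- ln (1 - Gv)))).
Proof.
  pose proof q01. pose proof ln1pG.
  rewrite ICr_0 by lra. fold L.
  assert (lowE : Rbar_le (Finite (ln (1 - Gv) + L)) (LimInf_seq excs)).
  { apply lim_low with (B := 0). intros n hn. rewrite exc_seq by auto.
    apply div_le; auto. apply ln_exc_low. }
  assert (upE : Rbar_le (LimSup_seq excs) (Finite (ln (1 + Gv) + L))).
  { apply lim_up. intros n hn. rewrite exc_seq by auto.
    apply div_le; auto. apply ln_exc_up. }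
  split; [|split; [apply LimSup_LimInf_seq_le|split]].
  - eapply Rbar_le_trans; [|exact lowE]. simpl. lra.
  - eapply Rbar_le_trans; [exact upE|]. simpl. lra.
  - destruct (Rle_lt_dec qo (1/2)) as [hq|hq].
    + rewrite ICr_inf_good by auto.
      assert (lowM : Rbar_le (Finite (ln (1 - Gv) + L)) (LimInf_seq meas)).
      { apply lim_low with (B := 0). intros n hn. rewrite mea_seq by auto.
        apply div_le; auto. apply ln_mea_low_good. }
      assert (upM : Rbar_le (LimSup_seq meas) (Finite (ln (1 + Gv) + L))).
      { apply lim_up. intros n hn. rewrite mea_seq by auto.
        apply div_le; auto. apply ln_mea_up_good; auto. }
      split; [|split; [apply LimSup_LimInf_seq_le|]].
      * eapply Rbar_le_trans; [|exact lowM]. simpl. lra.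
      * eapply Rbar_le_trans; [exact upM|]. simpl. lra.
    + rewrite ICr_inf_bad by auto.
      assert (lowM : Rbar_le (Finite (ln (1 - Gv))) (LimInf_seq meas)).
      { apply lim_low with (B := ln (1 - (1 - qo) / qo)). intros n hn. rewrite mea_seq by auto.
        apply div_le; auto. apply ln_mea_low_bad; auto. }
      assert (upM : Rbar_le (LimSup_seq meas) (Finite 0)).
      { apply lim_up. intros n hn. rewrite mea_seq by auto.
        apply div_le; auto. apply ln_mea_up_bad; auto. }
      split; [|split; [apply LimSup_LimInf_seq_le|]].
      * eapply Rbar_le_trans; [|exact lowM]. simpl. lra.
      * eapply Rbar_le_trans; [exact upM|]. simpl.
        assert (0 <= - ln (1 - Gv)).
        { pose proof Gv0. assert (hGv : Gv < 1) by exact hG1.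
          assert (ln (1 - Gv) <= 0) by (rewrite <- ln_1; apply ln_le; lra). lra. }
        lra.
Qed.

End Core.

Theorem proposition3p5 :
  forall (p : Z -> R) (pm pp : R),
    (forall k, 0 < p k < 1) ->
    0 < pm < 1 -> 0 < pp < 1 ->
    is_lim_seq (fun n : nat => p (- Z.of_nat n)%Z) pm ->
    is_lim_seq (fun n : nat => p (Z.of_nat n)) pp ->
  forall epsstar : R, 0 < epsstar ->
    (forall eps, 0 < eps < epsstar -> G p pm pp eps < 1) ->
  exists g : R -> R,
    filterlim g (at_right 0) (locally 0) /\
    forall (eps : R) (Rad : nat),
      0 < eps < epsstar ->
      (Z.of_nat Rad >= RZ eps)%Z ->
      forall s : sgn,
        let exc := fun n : nat =>
          ln (Pw p (sz s * Z.of_nat Rad) (mlen n) (Omega_exc s Rad (mlen n))) / INR n in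
        let mea := fun n : nat =>
          ln (Pw p (sz s * Z.of_nat Rad) (mlen n) (Omega_mea s Rad (mlen n))) / INR n in
        Rbar_le (Rbar_minus (Rbar_opp (ICr (psig pm pp s) 0)) (g eps)) (LimInf_seq exc) /\
        Rbar_le (LimInf_seq exc) (LimSup_seq exc) /\
        Rbar_le (LimSup_seq exc) (Rbar_plus (Rbar_opp (ICr (psig pm pp s) 0)) (g eps)) /\
        Rbar_le (Rbar_minus (Rbar_opp (ICr_inf (psig pm pp s) s)) (g eps)) (LimInf_seq mea) /\
        Rbar_le (LimInf_seq mea) (LimSup_seq mea) /\
        Rbar_le (LimSup_seq mea) (Rbar_plus (Rbar_opp (ICr_inf (psig pm pp s) s)) (g eps)).
Proof.
  intros p pm pp hp hpm hpp hlm hlp epsstar hes hG.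
  exists (fun eps => - ln (1 - G p pm pp eps)). split.
  - apply g_lim; auto.
  - intros eps Rad heps hRad s exc mea.
    exact (core_result p pm pp eps Rad s hp hpm hpp hRad (hG eps heps)).
Qed.
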